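(* Let $v$ be a non-leaf node of a draft tree with $m$ children $\mathcal{C}(v)=\{u_1,\dots,u_m\}$ generated by Greedy sampling, and let $\tilde p_v\in[0,1]$. Call an allocation at $v$ any rule assigning to each possible value $s$ of the sampled child $u_m$ numbers $q(t\mid s)\ge 0$, $t\in\Sigma$, with $\sum_{t\in\Sigma}q(t\mid s)\le 1$, that is locally lossless, i.e. $\sum_{s\in\Sigma}\mathcal{M}_s^\neg(s\mid v)\,q(t\mid s)=\tilde p_v\mathcal{M}_b(t\mid v)$ for all $t\in\Sigma$. Its conditional acceptance rate is $\mathbb{E}_{u_m\sim\mathcal{M}_s^\neg(\cdot\mid v)}\big[\sum_{j=1}^m q(u_j\mid u_m)\big]$. Then the UniVer allocation (the numbers $p_v(\cdot)$ defined in the context, viewed as functions of $u_m$) achieves the maximum conditional acceptance rate among all locally lossless allocations at $v$, and this maximum equals $$\alpha^*_{\rm UniVer}=\sum_{u\in H_v}\tilde p_v\mathcal{M}_b(u\mid v)+\sum_{u\in\Sigma}\min\{\tilde p_v\mathcal{M}_b(u\mid v),\,\mathcal{M}_s^\neg(u\mid v)\}.$$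
   Context: Let $\Sigma$ be a finite vocabulary, and let $\mathcal{M}_b(\cdot\mid v)$ (target) and $\mathcal{M}_s(\cdot\mid v)$ (draft) be probability distributions on $\Sigma$ conditioned on the context $v$. Greedy sampling of the $m$ children of $v$: $u_1,\dots,u_{m-1}$ are the $m-1$ most probable tokens under $\mathcal{M}_s(\cdot\mid v)$ (set $H_v=\{u_1,\dots,u_{m-1}\}$, i.e. $H_v$ is the set of the top-$(m-1)$ tokens of $\mathcal{M}_s(\cdot\mid v)$, ties broken by a fixed rule), and $u_m$ is drawn from the residual distribution $\mathcal{M}_s^\neg(\cdot\mid v)$, where $\mathcal{M}_s^\neg(x\mid v)=\mathcal{M}_s(x\mid v)/\sum_{y\notin H_v}\mathcal{M}_s(y\mid v)$ for $x\notin H_v$ and $0$ for $x\in H_v$. $[x]_+=\max\{x,0\}$. UniVer allocation at $v$ with prefix acceptance probability $\tilde p_v$: $Z_v=1-\tilde p_v+\sum_{x\in\Sigma}[\tilde p_v\mathcal{M}_b(x\mid v)-\mathcal{M}_s^\neg(x\mid v)]_+$; $p_v(u_m)=\min\{1,\tilde p_v\mathcal{M}_b(u_m\mid v)/\mathcal{M}_s^\neg(u_m\mid v)\}$; for every $u\in\Sigma\setminus\{u_m\}$, $p_v(u)=[\tilde p_v\mathcal{M}_b(u\mid v)-\mathcal{M}_s^\neg(u\mid v)]_+\,(1-p_v(u_m))/Z_v$. *)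

(* Defs.v *)
From HB Require Import structures.
From mathcomp Require Import all_boot all_order all_algebra.
Set Implicit Arguments. Unset Strict Implicit. Unset Printing Implicit Defensive.
Import Order.TTheory GRing.Theory Num.Theory.
Local Open Scope ring_scope.

Definition is_distr (R : realFieldType) (Sigma : finType) (P : Sigma -> R) :=
  (forall x, 0 <= P x) /\ \sum_(x : Sigma) P x = 1.

Definition posp (R : realFieldType) (x : R) : R := Num.max x 0.

Definition is_top_set (R : realFieldType) (Sigma : finType) (Ms : Sigma -> R)
  (k : nat) (H : {set Sigma}) :=
  #|H| = k /\ (forall x y, x \in H -> y \notin H -> Ms y <= Ms x).

Definition Mneg (R : realFieldType) (Sigma : finType) (Ms : Sigma -> R)
  (H : {set Sigma}) (x : Sigma) : R :=
  if x \in H then 0 else Ms x / \sum_(y | y \notin H) Ms y.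

Definition Zv (R : realFieldType) (Sigma : finType) (pt : R) (Mb Ms : Sigma -> R)
  (H : {set Sigma}) : R :=
  1 - pt + \sum_(x : Sigma) posp (pt * Mb x - Mneg Ms H x).

(* UniVer allocation: univer ... s t = p_v(t) when the sampled child u_m = s. *)
Definition univer (R : realFieldType) (Sigma : finType) (pt : R) (Mb Ms : Sigma -> R)
  (H : {set Sigma}) (s t : Sigma) : R :=
  let pm := Num.min 1 (pt * Mb s / Mneg Ms H s) in
  if t == s then pm
  else posp (pt * Mb t - Mneg Ms H t) * (1 - pm) / Zv pt Mb Ms H.

(* an allocation: q s t = q(t | s), s = value of u_m *)
Definition is_allocation (R : realFieldType) (Sigma : finType) (q : Sigma -> Sigma -> R) :=
  forall s, (forall t, 0 <= q s t) /\ \sum_(t : Sigma) q s t <= 1.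

Definition locally_lossless (R : realFieldType) (Sigma : finType) (pt : R)
  (Mb Ms : Sigma -> R) (H : {set Sigma}) (q : Sigma -> Sigma -> R) :=
  forall t, \sum_(s : Sigma) Mneg Ms H s * q s t = pt * Mb t.

(* conditional acceptance rate: children are u_1..u_{m-1} = elements of H, u_m = s *)
Definition acc_rate (R : realFieldType) (Sigma : finType) (Ms : Sigma -> R)
  (H : {set Sigma}) (q : Sigma -> Sigma -> R) : R :=
  \sum_(s : Sigma) Mneg Ms H s * (\sum_(t in H) q s t + q s s).

(* Main.v *)
Require Import Defs.
From HB Require Import structures.
From mathcomp Require Import all_boot all_order all_algebra.
From mathcomp Require Import ring lra.
Import Order.TTheory GRing.Theory Num.Theory.
Local Open Scope ring_scope.

Section Helpers.
Context {R : realFieldType}.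

Lemma minposp (x y : R) : Num.min x y + posp (x - y) = x.
Proof.
rewrite /posp minEle maxEle; case: (lerP x y) => h; case: (lerP (x - y) 0) => h2; lra.
Qed.

Lemma posp_ge0 (x : R) : 0 <= posp x.
Proof. rewrite /posp maxEle; case: (lerP x 0) => h; lra. Qed.

Lemma posp_le (x : R) : x <= 0 -> posp x = 0.
Proof. rewrite /posp maxEle; case: (lerP x 0) => h; lra. Qed.

Lemma posp_gt (x : R) : 0 < x -> posp x = x.
Proof. rewrite /posp maxEle; case: (lerP x 0) => h; lra. Qed.

Lemma divle1 (X Z : R) : 0 <= X -> X <= Z -> X / Z <= 1.
Proof.
move=> h0 h1; have [->|nz] := eqVneq Z 0; first by rewrite invr0 mulr0.
have zp : 0 < Z by rewrite lt_def nz /=; lra.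
by rewrite ler_pdivrMr // mul1r.
Qed.

Lemma Npm (N b : R) : 0 <= N -> 0 <= b -> N * Num.min 1 (b / N) = Num.min b N.
Proof.
move=> hN hb; have [->|nz] := eqVneq N 0.
  rewrite mul0r minEle; case: lerP => h; lra.
have np : 0 < N by rewrite lt_def nz /=.
rewrite !minEle; case: (lerP 1 (b / N)) => h.
  move: h; rewrite ler_pdivlMr // mul1r => h.
  case: lerP => h2; lra.
move: h; rewrite ltr_pdivrMr // mul1r => h.
case: lerP => h2; last lra.
by rewrite mulrC divfK.
Qed.

End Helpers.

Theorem theorem5 (R : realFieldType) (Sigma : finType) (Mb Ms : Sigma -> R)
  (m : nat) (H : {set Sigma}) (pt : R) :
  is_distr Mb -> is_distr Ms -> (1 <= m)%N -> is_top_set Ms m.-1 H ->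
  0 < \sum_(y | y \notin H) Ms y ->
  0 <= pt <= 1 ->
  [/\ is_allocation (univer pt Mb Ms H),
      locally_lossless pt Mb Ms H (univer pt Mb Ms H),
      (forall q : Sigma -> Sigma -> R, is_allocation q ->
         locally_lossless pt Mb Ms H q ->
         acc_rate Ms H q <= acc_rate Ms H (univer pt Mb Ms H)) &
      acc_rate Ms H (univer pt Mb Ms H) =
        \sum_(u in H) pt * Mb u
        + \sum_(u : Sigma) Num.min (pt * Mb u) (Mneg Ms H u)].
Proof.
move=> [Mb0 Mb1] [Ms0 Ms1] _ _ Sp /andP[pt0 pt1].
set S := \sum_(y | y \notin H) Ms y in Sp.
set N := Mneg Ms H.
have N0 : forall x, 0 <= N x.
  move=> x; rewrite /N /Mneg; case: ifP => _ //.
  by apply: divr_ge0 => //; apply: ltW.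
have N1 : \sum_x N x = 1.
  rewrite (bigID (mem H)) /= big1; last by move=> x xH; rewrite /N /Mneg xH.
  rewrite add0r.
  under eq_bigr => x xH do rewrite /N /Mneg (negbTE xH).
  by rewrite -mulr_suml divff // gt_eqF.
have b0 : forall x, 0 <= pt * Mb x by move=> x; apply: mulr_ge0.
have bsum : \sum_x pt * Mb x = pt by rewrite -mulr_sumr Mb1 mulr1.
set M := \sum_x Num.min (pt * Mb x) (N x).
have P_E : \sum_x posp (pt * Mb x - N x) = pt - M.
  rewrite -[X in X - M]bsum /M -sumrB; apply: eq_bigr => x _.
  have := minposp (pt * Mb x) (N x); lra.
have Q_E : \sum_x posp (N x - pt * Mb x) = 1 - M.
  rewrite -N1 /M -sumrB; apply: eq_bigr => x _.
  have := minposp (N x) (pt * Mb x); rewrite minC; lra.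
have Z_E : Zv pt Mb Ms H = 1 - M by rewrite /Zv -/N P_E; lra.
have Zge : forall t, posp (pt * Mb t - N t) <= Zv pt Mb Ms H.
  move=> t; rewrite Z_E.
  have : posp (pt * Mb t - N t) <= \sum_x posp (pt * Mb x - N x).
    by rewrite (bigD1 t) //= lerDl sumr_ge0 // => x _; apply: posp_ge0.
  rewrite P_E; lra.
have Z0 : 0 <= Zv pt Mb Ms H.
  rewrite Z_E; suff : M <= 1 by lra.
  rewrite -N1; apply: ler_sum => x _; rewrite ge_min lexx; exact: orbT.
set pm := fun s => Num.min 1 (pt * Mb s / N s).
have uE : forall s t, univer pt Mb Ms H s t = if t == s then pm s else
    posp (pt * Mb t - N t) * (1 - pm s) / Zv pt Mb Ms H by [].
have pm0 : forall s, 0 <= pm s.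
  move=> s; rewrite /pm le_min ler01 /=; apply: divr_ge0 => //.
have pm1 : forall s, pm s <= 1 by move=> s; rewrite /pm ge_min lexx.
have Npm' : forall s, N s * pm s = Num.min (pt * Mb s) (N s).
  by move=> s; apply: Npm.
have LL : locally_lossless pt Mb Ms H (univer pt Mb Ms H).
  move=> t; rewrite (bigD1 t) //= uE eqxx Npm'.
  have -> : \sum_(s | s != t) Mneg Ms H s * univer pt Mb Ms H s t =
      posp (pt * Mb t - N t) / Zv pt Mb Ms H * \sum_(s | s != t) posp (N s - pt * Mb s).
    rewrite mulr_sumr; apply: eq_bigr => s /negbTE st; rewrite uE eq_sym st.
    have e : N s * (1 - pm s) = posp (N s - pt * Mb s).
      rewrite mulrBr mulr1 Npm'; have := minposp (N s) (pt * Mb s); rewrite minC; lra.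
    rewrite -e /N; ring.
  have := Q_E; rewrite (bigD1 t) //= => hq.
  have -> : \sum_(s | s != t) posp (N s - pt * Mb s) = 1 - M - posp (N t - pt * Mb t) by lra.
  have := Zge t; rewrite -Z_E.
  case: (lerP (pt * Mb t) (N t)) => h.
    rewrite (@posp_le _ (pt * Mb t - N t)); last lra.
    by rewrite mul0r mul0r addr0 ?minEle ?h.
  rewrite (@posp_le _ (N t - pt * Mb t)); last lra.
  rewrite (@posp_gt _ (pt * Mb t - N t)); last lra.
  move=> hz; rewrite subr0 divfK; last by apply/eqP => z0; rewrite z0 in hz; lra.
  lra.
have accE : forall q, locally_lossless pt Mb Ms H q ->
    acc_rate Ms H q = \sum_(u in H) pt * Mb u + \sum_s N s * q s s.
  move=> q Lq; rewrite /acc_rate; under eq_bigr do rewrite mulrDr.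
  rewrite big_split /=; congr (_ + _).
  under eq_bigr do rewrite mulr_sumr.
  rewrite exchange_big /=; apply: eq_bigr => t _; exact: Lq t.
split => //.
- move=> s; split.
    move=> t; rewrite uE; case: eqP => _ //.
    apply: divr_ge0 => //; apply: mulr_ge0; first exact: posp_ge0.
    by have := pm1 s; lra.
  rewrite (bigD1 s) //= uE eqxx.
  have -> : \sum_(t | t != s) univer pt Mb Ms H s t =
      (1 - pm s) * ((\sum_(t | t != s) posp (pt * Mb t - N t)) / Zv pt Mb Ms H).
    rewrite mulr_suml mulr_sumr; apply: eq_bigr => t /negbTE ts; rewrite uE ts; ring.
  have h1 : (1 - pm s) * ((\sum_(t | t != s) posp (pt * Mb t - N t)) / Zv pt Mb Ms H) <= (1 - pm s) * 1.
    apply: ler_wpM2l; first by have := pm1 s; lra.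
    apply: divle1; first by apply: sumr_ge0 => i _; apply: posp_ge0.
    rewrite /Zv; have : \sum_(t | t != s) posp (pt * Mb t - N t) <= \sum_t posp (pt * Mb t - N t).
      by rewrite [X in _ <= X](bigD1 s) //= lerDr posp_ge0.
    rewrite /N; lra.
  lra.
- move=> q Aq Lq; rewrite !accE // lerD2l; apply: ler_sum => s _.
  rewrite uE eqxx Npm' le_min; apply/andP; split.
    rewrite -(Lq s) (bigD1 s) //= lerDl; apply: sumr_ge0 => i _.
    by apply: mulr_ge0 => //; case: (Aq i) => a _; apply: a.
  apply: ler_piMr => //; case: (Aq s) => a b; apply: le_trans b.
  rewrite (bigD1 s) //= lerDl; apply: sumr_ge0 => i _; exact: a.
- rewrite accE //; congr (_ + _); apply: eq_bigr => s _; by rewrite uE eqxx Npm'.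
Qed.
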